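(* Let $\widehat M$ be a cooperative Markov game with MMDP $M$ and $(S_{target},S_{avoid})$ a reach-avoid objective, and let $v^*=\sup_{\pi_{act}}\mathbb P_{M_{\pi_{act}}}((\neg S_{avoid})\mathcal U S_{target})$. Let $(x^*_{s,a},x^*_{o,c})$ be an optimal solution of the optimization problem (OPT) below, and define $\pi^*_{comm}(o)(c)=x^*_{o,c}/\sum_{d\in\mathcal A_{comm}}x^*_{o,d}$ and $\pi^*_{act}(s)(a)=x^*_{s,a}/\sum_{b\in\mathcal A}x^*_{s,b}$ (arbitrary distributions where the denominator is $0$). Then $\mathbb P_{M_{\pi^*_{act}}}((\neg S_{avoid})\mathcal U S_{target})=v^*$, and for every pair $(\pi'_{comm},\pi'_{act})\in\Pi^{pos}_{comm}(\mathcal O,K)\times\Pi^{pos}_{act}(M)$ with $\mathbb P_{M_{\pi'_{act}}}((\neg S_{avoid})\mathcal U S_{target})=v^*$ (and finite occupancy measures) we have $\bar D_{(\pi^*_{comm},\pi^*_{act})}\le\bar D_{(\pi'_{comm},\pi'_{act})}$. (OPT): variables $x_{s,a}\ge0$ for $s\in\mathcal S\setminus\mathcal T$, $a\in\mathcal A$, and $x_{o,c}\ge0$ for $o\in\mathcal O$, $c\in\mathcal A_{comm}$; minimize $\bar d=\Phi(x)$ subject to (i) flow: $\sum_{a}x_{s,a}=\sum_{s'\notin\mathcal T,\,b\in\mathcal A}x_{s',b}P(s',b)(s)+\mathbb 1[s=s_{init}]$ for all $s\in\mathcal S\setminus\mathcal T$; (ii) reach-avoid: $v^*\le\sum_{s\notin\mathcal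 T,\,a\in\mathcal A,\,s'\in S_{target}}x_{s,a}P(s,a)(s')$; (iii) consistency: $\sum_{l\in\mathcal L:(o,l)\notin\mathcal T,\,a\in\mathcal A}x_{(o,l),a}=\sum_{c\in\mathcal A_{comm}}x_{o,c}$ for all $o\in\mathcal O$.
   Context: MMDP: there are $N\ge1$ agents, identified with $[N]=\{1,\dots,N\}$. Agent $i$ has a finite local state set $\mathcal S^i$, finite local action set $\mathcal A^i$, local transition function $P^i:\mathcal S^i\times\mathcal A^i\to\Delta(\mathcal S^i)$ and initial local state $s^i_{init}$. Joint states $\mathcal S=\prod_i\mathcal S^i$, joint actions $\mathcal A=\prod_i\mathcal A^i$, joint transitions $P(s,a)(u)=\prod_{i}P^i(s^i,a^i)(u^i)$, initial state $s_{init}$. Positional joint action policies $\pi_{act}:\mathcal S\to\Delta(\mathcal A)$ form $\Pi^{pos}_{act}(M)$. Cooperative Markov game $\widehat M=(M,\mathcal O^1,\dots,\mathcal O^N,\mathcal L^1,\dots,\mathcal L^N,K)$: each $\mathcal S^i=\mathcal O^i\times\mathcal L^i$; $\mathcal O=\prod_i\mathcal O^i$, $\mathcal L=\prod_i\mathcal L^i$, joint state $s=(o,l)$. For $c\subseteq[N]$, $\mathcal L^c,\mathcal A^c$ are the products over $j\in c$, $o^c,l^c,a^c$ restrictions, $P^c((o^c,l^c),a^c)((o^c_1,l^c_1))=\prod_{j\in c}P^j((o^j,l^j),a^j)((o^j_1,l^j_1))$. $K\in\{0,\dots,N\}$; $\mathcal A_{comm}$ is the set of subsets of $[N]$ of size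 $K$. Positional communication policies $\pi_{comm}:\mathcal O\to\Delta(\mathcal A_{comm})$ form $\Pi^{pos}_{comm}(\mathcal O,K)$. Reach-avoid objective: disjoint $S_{target},S_{avoid}\subseteq\mathcal S$, $\mathcal T=S_{target}\cup S_{avoid}$; the process $S_0=s_{init},A_1,S_1,\dots$ of $M$ under $\pi_{act}$ (with $\mathbb P(A_t=a,S_t=s'\mid\dots,S_{t-1}=s)=\pi_{act}(s)(a)P(s,a)(s')$) is stopped upon entering $\mathcal T$; $\mathbb P_{M_{\pi_{act}}}((\neg S_{avoid})\mathcal U S_{target})$ is the probability of reaching $S_{target}$ without previously visiting $S_{avoid}$. Occupancy measures: $\nu_{s,a}=\sum_{t\ge1}\mathbb P(S_{t-1}=s,A_t=a,\ S_0,\dots,S_{t-1}\notin\mathcal T)$ for $s\notin\mathcal T$. The function $\Phi$: for nonnegative numbers $y_{s,a}$ ($s\notin\mathcal T$) and weights $W'(o,i)$, $W''(o,c)$, with marginals $y_{o,l^c,a^c}=\sum y_{(o,l),a}$ over $l$ with restriction $l^c$, $(o,l)\notin\mathcal T$, and $a$ with restriction $a^c$ ($y_{o,l^i,a^i}$ for $c=\{i\}$), put $h=-\sum_{s\notin\mathcal T,a}y_{s,a}\log\frac{y_{s,a}}{\sum_by_{s,b}}-\sum_{s\notin\mathcal T,a,s'}y_{s,a}P(s,a)(s')\log P(s,a)(s')$, $g^i=-\sum_{o,l^i,a^i}y_{o,l^i,a^i}W'(o,i)\log\frac{y_{o,l^i,a^i}}{\sum_{b^i}y_{o,l^i,b^i}}-\sum_{o,l^i,a^i,o^i_1,l^i_1}y_{o,l^i,a^i}W'(o,i)P^i((o^i,l^i),a^i)((o^i_1,l^i_1))\log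 P^i((o^i,l^i),a^i)((o^i_1,l^i_1))$, $g^c$ analogously with $c$ in place of $i$, $W''(o,c)$ and $P^c$; and value $-h+\sum_{i\in[N]}g^i+\sum_{c\in\mathcal A_{comm}}g^c$. In (OPT), $\Phi(x)$ is this value with $y=x$, $W'(o,i)=\sum_{c\in\mathcal A_{comm},i\notin c}x_{o,c}/\sum_{c'}x_{o,c'}$ and $W''(o,c)=x_{o,c}/\sum_{c'}x_{o,c'}$. For a policy pair, $\bar D_{(\pi_{comm},\pi_{act})}$ is this value with $y=\nu$ (occupancy measures of $\pi_{act}$), $W'(o,i)=\sum_{c\in\mathcal A_{comm},i\notin c}\pi_{comm}(o)(c)$ and $W''(o,c)=\pi_{comm}(o)(c)$. Conventions: $0\log0=0$; summands with zero occupancy are $0$. *)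

(* Defs.v *)
From HB Require Import structures.
From mathcomp Require Import all_boot all_order all_algebra.
From mathcomp Require Import all_classical all_reals all_analysis.
Set Implicit Arguments.
Unset Strict Implicit.
Unset Printing Implicit Defensive.
Import Order.TTheory GRing.Theory Num.Theory.
Local Open Scope ring_scope.

(* Cooperative Markov game: N agents ('I_N), agent i has local state set     *)
(* S^i = O^i x L^i, local actions A^i, local transition P^i, initial local  *)
(* state (o^i_init, l^i_init); K is the communication budget, K <= N.        *)
Record coop_game (R : realType) := CoopGame {
  nag : nat;
  obs : 'I_nag -> finType;
  loc : 'I_nag -> finType;
  act : 'I_nag -> finType;
  trans : forall i, (obs i * loc i)%type -> act i -> (obs i * loc i)%type -> R;
  init_obs : forall i, obs i;
  init_loc : forall i, loc i;
  ncomm : nat;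
  trans_ge0 : forall (i : 'I_nag) s a s', 0 <= trans (i:=i) s a s';
  trans_sum1 : forall (i : 'I_nag) s a, \sum_(s' : (obs i * loc i)%type) trans (i:=i) s a s' = 1;
  ncomm_le : (ncomm <= nag)%N
}.
Arguments nag {R} c.
Arguments obs {R} c i.
Arguments loc {R} c i.
Arguments act {R} c i.
Arguments trans {R} c i s a s'.
Arguments init_obs {R} c i.
Arguments init_loc {R} c i.
Arguments ncomm {R} c.

Notation Oj G := {dffun forall i : 'I_(nag G), obs G i}.
Notation Lj G := {dffun forall i : 'I_(nag G), loc G i}.
Notation Sj G := (Oj G * Lj G)%type.
Notation Aj G := {dffun forall i : 'I_(nag G), act G i}.
Notation Acomm G := {c : {set 'I_(nag G)} | #|c| == ncomm G}.

Section Game.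
Variables (R : realType) (G : coop_game R).

Definition s_init : Sj G :=
  ([ffun i => init_obs G i], [ffun i => init_loc G i]).

Definition jtrans (s : Sj G) (a : Aj G) (s' : Sj G) : R :=
  \prod_(i < nag G) trans G i (s.1 i, s.2 i) (a i) (s'.1 i, s'.2 i).

Definition is_act_policy (pi : Sj G -> Aj G -> R) : Prop :=
  forall s, (forall a, 0 <= pi s a) /\ \sum_a pi s a = 1.

Definition is_comm_policy (pc : Oj G -> Acomm G -> R) : Prop :=
  forall o, (forall c, 0 <= pc o c) /\ \sum_c pc o c = 1.

Variable (T : {set Sj G}). (* T = S_target :|: S_avoid, the stopping set *)

(* alive t s = P(S_t = s, S_0, ..., S_{t-1} \notin T) in the process stopped
   on entering T, under policy pi. *)
Fixpoint alive (pi : Sj G -> Aj G -> R) (t : nat) (s' : Sj G) : R :=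
  match t with
  | 0 => (s' == s_init)%:R
  | t.+1 => \sum_(s : Sj G | s \notin T) \sum_(a : Aj G)
              alive pi t s * pi s a * jtrans s a s'
  end.

(* occupancy measure nu_{s,a} = sum_{t>=1} P(S_{t-1}=s, A_t=a, S_0..S_{t-1} \notin T)
   (for s \notin T); an extended real, possibly +oo. *)
Definition occ (pi : Sj G -> Aj G -> R) (s : Sj G) (a : Aj G) : \bar R :=
  (\sum_(t <oo) ((alive pi t s * pi s a)%:E))%E.

(* P((not S_avoid) U S_target): probability that the first entrance into T
   happens at a state of S_target (= sum over t of P(S_t in S_target,
   S_0..S_{t-1} \notin T)). *)
Definition reach_prob (Starget : {set Sj G}) (pi : Sj G -> Aj G -> R) : \bar R :=
  (\sum_(t <oo) ((\sum_(s in Starget) alive pi t s)%:E))%E.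

Definition vstar (Starget : {set Sj G}) : \bar R :=
  ereal_sup [set reach_prob Starget pi | pi in is_act_policy].

(* An element of prod_{j in c} X_j is encoded as a partial assignment
   x : forall i, option (X i) whose support is exactly c. *)
Definition supp_on (X : 'I_(nag G) -> finType) (c : {set 'I_(nag G)})
  (x : {dffun forall i : 'I_(nag G), option (X i)}) : bool :=
  [forall i, (x i != None) == (i \in c)].

Definition restr (X : 'I_(nag G) -> finType) (c : {set 'I_(nag G)})
  (x : {dffun forall i : 'I_(nag G), X i}) : {dffun forall i : 'I_(nag G), option (X i)} :=
  [ffun i => if i \in c then Some (x i) else None].

Notation Lc := {dffun forall i : 'I_(nag G), option (loc G i)}.
Notation Ac := {dffun forall i : 'I_(nag G), option (act G i)}.
Notation Oc := {dffun forall i : 'I_(nag G), option (obs G i)}.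

Definition ctrans (c : {set 'I_(nag G)}) (o : Oj G) (lc : Lc) (ac : Ac)
  (o1c : Oc) (l1c : Lc) : R :=
  \prod_(j in c)
     match lc j, ac j, o1c j, l1c j with
     | Some lj, Some aj, Some o1j, Some l1j => trans G j (o j, lj) aj (o1j, l1j)
     | _, _, _, _ => 0
     end.

Definition xlog (x y : R) : R := if x == 0 then 0 else x * ln y.

Definition marg (y : Sj G -> Aj G -> R) (c : {set 'I_(nag G)}) (o : Oj G)
  (lc : Lc) (ac : Ac) : R :=
  \sum_(l : Lj G | ((o, l) \notin T) && (restr c l == lc))
    \sum_(a : Aj G | restr c a == ac) y (o, l) a.

Definition hterm (y : Sj G -> Aj G -> R) : R :=
  - (\sum_(s : Sj G | s \notin T) \sum_(a : Aj G)
        xlog (y s a) (y s a / \sum_(b : Aj G) y s b))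
  - (\sum_(s : Sj G | s \notin T) \sum_(a : Aj G) \sum_(s' : Sj G)
        xlog (y s a * jtrans s a s') (jtrans s a s')).

Definition gterm (y : Sj G -> Aj G -> R) (c : {set 'I_(nag G)}) (W : Oj G -> R) : R :=
  - (\sum_(o : Oj G) \sum_(lc : Lc | supp_on c lc) \sum_(ac : Ac | supp_on c ac)
        xlog (marg y c o lc ac * W o)
             (marg y c o lc ac / \sum_(bc : Ac | supp_on c bc) marg y c o lc bc))
  - (\sum_(o : Oj G) \sum_(lc : Lc | supp_on c lc) \sum_(ac : Ac | supp_on c ac)
     \sum_(o1c : Oc | supp_on c o1c) \sum_(l1c : Lc | supp_on c l1c)
        xlog (marg y c o lc ac * W o * ctrans c o lc ac o1c l1c)
             (ctrans c o lc ac o1c l1c)).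

Definition Phi_val (y : Sj G -> Aj G -> R) (W1 : Oj G -> 'I_(nag G) -> R)
  (W2 : Oj G -> Acomm G -> R) : R :=
  - hterm y + \sum_(i < nag G) gterm y [set i] (fun o => W1 o i)
            + \sum_(c : Acomm G) gterm y (val c) (fun o => W2 o c).

Definition Phi (x1 : Sj G -> Aj G -> R) (x2 : Oj G -> Acomm G -> R) : R :=
  Phi_val x1
    (fun o i => (\sum_(c : Acomm G | i \notin val c) x2 o c) / \sum_(c' : Acomm G) x2 o c')
    (fun o c => x2 o c / \sum_(c' : Acomm G) x2 o c').

Definition Dbar (pc : Oj G -> Acomm G -> R) (pa : Sj G -> Aj G -> R) : R :=
  Phi_val (fun s a => fine (occ pa s a))
    (fun o i => \sum_(c : Acomm G | i \notin val c) pc o c)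
    (fun o c => pc o c).

Definition opt_feasible (Starget : {set Sj G})
  (x1 : Sj G -> Aj G -> R) (x2 : Oj G -> Acomm G -> R) : Prop :=
  [/\ (forall s a, s \notin T -> 0 <= x1 s a),
      (forall o c, 0 <= x2 o c),
      (forall s, s \notin T ->
         \sum_(a : Aj G) x1 s a =
         \sum_(s' : Sj G | s' \notin T) \sum_(b : Aj G) x1 s' b * jtrans s' b s
         + (s == s_init)%:R),
      (vstar Starget <= (\sum_(s : Sj G | s \notin T) \sum_(a : Aj G)
          \sum_(s' in Starget) x1 s a * jtrans s a s')%:E)%E &
      (forall o : Oj G,
         \sum_(l : Lj G | (o, l) \notin T) \sum_(a : Aj G) x1 (o, l) a =
         \sum_(c : Acomm G) x2 o c)].

Definition opt_optimal (Starget : {set Sj G})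
  (x1 : Sj G -> Aj G -> R) (x2 : Oj G -> Acomm G -> R) : Prop :=
  opt_feasible Starget x1 x2 /\
  forall y1 y2, opt_feasible Starget y1 y2 -> Phi x1 x2 <= Phi y1 y2.

End Game.

(* Main.v *)
Require Import Defs.
From HB Require Import structures.
From mathcomp Require Import all_boot all_order all_algebra.
From mathcomp Require Import all_classical all_reals all_analysis.
From mathcomp Require Import ring lra.
Import Order.TTheory GRing.Theory Num.Theory.
Local Open Scope ring_scope.
Set Warnings "-notation-overridden,-ambiguous-paths,-notation-incompatible-prefix,-deprecated".

Section RealLemmas.
Variable R : realType.
Implicit Types p q P Q k : R.

Lemma xlogMl k p : xlog (k * p) p = k * xlog p p.
Proof.
rewrite /xlog; have [->|p0] := eqVneq p 0; first by rewrite !mulr0 eqxx.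
have [->|k0] := eqVneq k 0; first by rewrite !mul0r eqxx.
by rewrite mulf_eq0 (negbTE k0) (negbTE p0) /= mulrA.
Qed.

Lemma xlog0 p : xlog 0 p = 0.
Proof. by rewrite /xlog eqxx. Qed.

Lemma ln_le_sub1 (u : R) : 0 < u -> ln u <= u - 1.
Proof.
move=> u0; have := @le_ln1Dx R (u - 1); rewrite addrCA subrr addr0; apply.
lra.
Qed.

Lemma logsum p q P Q : 0 < p -> 0 < q -> 0 < P -> 0 < Q ->
  (p + q) * ln ((p + q) / (P + Q)) <= p * ln (p / P) + q * ln (q / Q).
Proof.
move=> p0 q0 P0 Q0.
set r := (p + q) / (P + Q).
have r0 : 0 < r by rewrite /r divr_gt0 // addr_gt0.
set u := r * P / p; set v := r * Q / q.
have u0 : 0 < u by rewrite /u divr_gt0 // mulr_gt0.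
have v0 : 0 < v by rewrite /v divr_gt0 // mulr_gt0.
have hp : p / P = r / u.
  by rewrite /u; field; rewrite ?gt_eqF.
have hq : q / Q = r / v.
  by rewrite /v; field; rewrite ?gt_eqF.
rewrite hp hq ![ln (r / _)]ln_div ?posrE //.
have lu := ln_le_sub1 u u0; have lv := ln_le_sub1 v v0.
have e : p * u + q * v = p + q.
  rewrite /u /v /r; field.
  by rewrite ?gt_eqF ?addr_gt0.
have h1 : p * ln u <= p * (u - 1) by rewrite ler_wpM2l // ltW.
have h2 : q * ln v <= q * (v - 1) by rewrite ler_wpM2l // ltW.
rewrite mulrDl !mulrBr; move: h1 h2; rewrite !mulrBr !mulr1 => h1 h2.
lra.
Qed.

Lemma xlogE p P : p != 0 -> xlog p P = p * ln P.
Proof. by rewrite /xlog => /negbTE ->. Qed.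

Lemma xlog_logsum p q P Q : 0 <= p -> p <= P -> 0 <= q -> q <= Q ->
  xlog (p + q) ((p + q) / (P + Q)) <= xlog p (p / P) + xlog q (q / Q).
Proof.
move=> p0 pP q0 qQ.
have P0 : 0 <= P by apply: le_trans pP.
have Q0 : 0 <= Q by apply: le_trans qQ.
have [pe|pn0] := eqVneq p 0.
  rewrite pe !add0r xlog0 add0r.
  have [qe|qn0] := eqVneq q 0; first by rewrite qe !xlog0.
  have qp : 0 < q by rewrite lt_def qn0.
  have Qp : 0 < Q by apply: lt_le_trans qQ.
  rewrite !xlogE // ler_pM2l // ler_ln ?posrE ?divr_gt0 ?ltr_wpDl //.
  by rewrite ler_pM2l // lef_pV2 ?posrE ?ltr_wpDl // lerDr.
have pp : 0 < p by rewrite lt_def pn0.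
have Pp : 0 < P by apply: lt_le_trans pP.
have [qe|qn0] := eqVneq q 0.
  rewrite qe !addr0 xlog0 addr0.
  rewrite !xlogE // ler_pM2l // ler_ln ?posrE ?divr_gt0 ?ltr_wpDr //.
  by rewrite ler_pM2l // lef_pV2 ?posrE ?ltr_wpDr // lerDl.
have qp : 0 < q by rewrite lt_def qn0.
have Qp : 0 < Q by apply: lt_le_trans qQ.
rewrite !xlogE ?gt_eqF ?addr_gt0 //.
exact: logsum.
Qed.

End RealLemmas.

Lemma sum_dffun_prod (R : realType) (I : finType) (T_ : I -> finType)
  (F : forall i, T_ i -> R) :
  \sum_(f : {dffun forall i, T_ i}) \prod_i F i (f i) =
  \prod_i \sum_(x : T_ i) F i x.
Proof.
pose P_ i := [ffun x : T_ i => F i x].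
transitivity (\sum_(t : fprod T_) \prod_(i in I) P_ i (t i)).
  rewrite (reindex (@dffun_of_fprod I T_)); last first.
    exact/onW_bij/dffun_of_fprod_bij.
  by apply: eq_bigr => t _; apply: eq_bigr => i _; rewrite /dffun_of_fprod !ffunE.
rewrite big_fprod; symmetry.
transitivity (\prod_i \sum_(j | tagged_with T_ i j) untag 0 (P_ i) j).
  apply: eq_bigr => i _.
  have -> : \sum_(x : T_ i) F i x = \sum_(x : T_ i) P_ i x.
    by apply: eq_bigr => x _; rewrite ffunE.
  by rewrite (big_tag (fun i x => P_ i x)).
by rewrite bigA_distr_big_dep.
Qed.

Section Jtrans.
Variables (R : realType) (G : coop_game R).

Lemma jtrans_ge0 (s : Sj G) (a : Aj G) (s' : Sj G) : 0 <= jtrans s a s'.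
Proof. by apply: prodr_ge0 => i _; apply: trans_ge0. Qed.

Lemma jtrans_sum1 (s : Sj G) (a : Aj G) : \sum_(s' : Sj G) jtrans s a s' = 1 :> R.
Proof.
pose h (f : {dffun forall i : 'I_(nag G), (obs G i * loc G i)%type}) : Sj G :=
  ([ffun i => (f i).1], [ffun i => (f i).2]).
pose g (s : Sj G) : {dffun forall i : 'I_(nag G), (obs G i * loc G i)%type} :=
  [ffun i => (s.1 i, s.2 i)].
have hK : cancel h g by move=> f; apply/ffunP => i; rewrite /g /h !ffunE /= -surjective_pairing.
have gK : cancel g h.
  by case=> o l; rewrite /g /h /=; congr pair; apply/ffunP => i; rewrite !ffunE.
rewrite (reindex h); last by exists g => x _.
rewrite /jtrans.
transitivity (\sum_(f : {dffun forall i : 'I_(nag G), (obs G i * loc G i)%type})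
   \prod_i trans G i (s.1 i, s.2 i) (a i) (f i)).
  apply: eq_bigr => f _; apply: eq_bigr => i _; rewrite /h /= !ffunE.
  by rewrite -surjective_pairing.
rewrite (@sum_dffun_prod R _ _ (fun i x => trans G i (s.1 i, s.2 i) (a i) x)).
by rewrite big1 // => i _; rewrite trans_sum1.
Qed.

End Jtrans.

Lemma nneseries_le_boundR (R : realType) (u : nat -> R) (b : R) :
  (forall n, 0 <= u n) -> (forall n, \sum_(0 <= i < n) u i <= b) ->
  (\sum_(i <oo) (u i)%:E <= b%:E)%E.
Proof.
move=> u0 ub; apply: lime_le.
  by apply: is_cvg_nneseries => n _ _; rewrite lee_fin.
by apply: nearW => n; rewrite sumEFin lee_fin.
Qed.

Section Markov.
Variables (R : realType) (G : coop_game R) (T : {set Sj G}).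
Variable (pi : Sj G -> Aj G -> R).
Hypothesis hpi : is_act_policy pi.

Definition delta (s : Sj G) : R := (s == s_init G)%:R.

Lemma pol_ge0 s a : 0 <= pi s a. Proof. by case: (hpi s) => h _; apply: h. Qed.
Lemma pol_sum1 s : \sum_a pi s a = 1. Proof. by case: (hpi s). Qed.

Lemma alive_ge0 t s : 0 <= alive T pi t s.
Proof.
elim: t s => [|t IH] s /=; first by rewrite ler0n.
apply: sumr_ge0 => s' _; apply: sumr_ge0 => b _.
by rewrite mulr_ge0 ?jtrans_ge0 // mulr_ge0 ?pol_ge0.
Qed.

Definition nuE (s : Sj G) : \bar R := (\sum_(t <oo) (alive T pi t s)%:E)%E.

Lemma nuE_ge0 s : (0 <= nuE s)%E.
Proof. by apply: nneseries_ge0 => n _ _; rewrite lee_fin alive_ge0. Qed.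

Lemma nuE_flow s : nuE s = ((delta s)%:E + \sum_(s' | s' \notin T) \sum_b
    (pi s' b * jtrans s' b s)%:E * nuE s')%E.
Proof.
rewrite /nuE nneseries_recl //; last by move=> k _; rewrite lee_fin alive_ge0.
congr (_ + _)%E.
rewrite -(@nneseries_addn _ _ 1); last by move=> i; rewrite lee_fin alive_ge0.
rewrite (@eq_eseriesr _ _ (fun i => \sum_(s' | s' \notin T) \sum_b
   (pi s' b * jtrans s' b s)%:E * (alive T pi i s')%:E)%E); last first.
  move=> i _; rewrite addn1 /= -sumEFin; apply: eq_bigr => s' _.
  rewrite -sumEFin; apply: eq_bigr => b _.
  by rewrite -EFinM; congr (_%:E); ring.
rewrite nneseries_sum; last first.
  by move=> s' j _; apply: sume_ge0 => b _; rewrite -EFinM lee_fin mulr_ge0 ?alive_ge0 // mulr_ge0 ?pol_ge0 ?jtrans_ge0.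
apply: eq_bigr => s' _.
rewrite nneseries_sum; last first.
  by move=> b j _; rewrite -EFinM lee_fin mulr_ge0 ?alive_ge0 // mulr_ge0 ?pol_ge0 ?jtrans_ge0.
apply: eq_bigr => b _.
by rewrite nneseriesZl // => i _; rewrite lee_fin alive_ge0.
Qed.

Definition Vp (n : nat) (s : Sj G) : R := \sum_(0 <= t < n) alive T pi t s.

Lemma Vp_S n s : Vp n.+1 s = delta s + \sum_(s' | s' \notin T) \sum_b
   Vp n s' * pi s' b * jtrans s' b s.
Proof.
rewrite /Vp big_nat_recl //; congr (_ + _).
under eq_bigr do rewrite /=.
rewrite exchange_big /=; apply: eq_bigr => s' _.
rewrite exchange_big /=; apply: eq_bigr => b _.
by rewrite !mulr_suml.
Qed.

Lemma Vp_bound (X : Sj G -> R) :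
  (forall s, s \notin T -> 0 <= X s) ->
  (forall s, s \notin T -> X s = delta s + \sum_(s' | s' \notin T) \sum_b
      X s' * pi s' b * jtrans s' b s) ->
  forall n s, s \notin T -> Vp n s <= X s.
Proof.
move=> X0 Xf; elim=> [|n IH] s sT; first by rewrite /Vp big_geq // X0.
rewrite Vp_S Xf // lerD2l; apply: ler_sum => s' s'T; apply: ler_sum => b _.
by rewrite ler_wpM2r ?jtrans_ge0 // ler_wpM2r ?pol_ge0 // IH.
Qed.

Lemma nuE_bound (X : Sj G -> R) :
  (forall s, s \notin T -> 0 <= X s) ->
  (forall s, s \notin T -> X s = delta s + \sum_(s' | s' \notin T) \sum_b
      X s' * pi s' b * jtrans s' b s) ->
  forall s, s \notin T -> (nuE s <= (X s)%:E)%E.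
Proof.
move=> X0 Xf s sT; apply: nneseries_le_boundR; first by move=> n; exact: alive_ge0.
by move=> n; apply: Vp_bound.
Qed.

Definition nu (s : Sj G) : R := fine (nuE s).

Section Fin.
Hypothesis hfin : forall s, s \notin T -> nuE s \is a fin_num.

Lemma nu_flow_E s : nuE s = (delta s + \sum_(s' | s' \notin T) \sum_b
    nu s' * pi s' b * jtrans s' b s)%:E.
Proof.
rewrite nuE_flow EFinD -sumEFin; congr (_ + _)%E.
apply: eq_bigr => s' s'T; rewrite -sumEFin; apply: eq_bigr => b _.
by rewrite /nu -[in LHS](fineK (hfin _ s'T)) -EFinM mulrC mulrA.
Qed.

Lemma nuE_nu s : nuE s = (nu s)%:E.
Proof. by rewrite /nu nu_flow_E. Qed.

Lemma nu_flow s : nu s = delta s + \sum_(s' | s' \notin T) \sum_b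
    nu s' * pi s' b * jtrans s' b s.
Proof. by rewrite {1}/nu nu_flow_E. Qed.

Lemma nu_ge0 s : 0 <= nu s.
Proof. by rewrite -lee_fin -nuE_nu nuE_ge0. Qed.

Lemma reach_nu (tg : {set Sj G}) : reach_prob T tg pi = (\sum_(s in tg) nu s)%:E.
Proof.
rewrite /reach_prob (@eq_eseriesr _ _ (fun t => \sum_(s in tg) (alive T pi t s)%:E)%E);
  last by move=> i _; rewrite sumEFin.
rewrite nneseries_sum; last by move=> s j _; rewrite lee_fin alive_ge0.
rewrite -sumEFin; apply: eq_bigr => s _; exact: nuE_nu.
Qed.

End Fin.

Lemma occE s a : occ T pi s a = ((pi s a)%:E * nuE s)%E.
Proof.
rewrite /occ -nneseriesZl; last by move=> i _; rewrite lee_fin alive_ge0.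
by apply: eq_eseriesr => i _; rewrite -EFinM mulrC.
Qed.

Lemma fin_of_occ : (forall s a, s \notin T -> (occ T pi s a < +oo)%E) ->
  forall s, s \notin T -> nuE s \is a fin_num.
Proof.
move=> ho s sT; rewrite ge0_fin_numE ?nuE_ge0 //.
have -> : nuE s = (\sum_a occ T pi s a)%E.
  under eq_bigr do rewrite occE.
  by rewrite -ge0_sume_distrl ?sumEFin ?pol_sum1 ?mul1e // => a _; rewrite lee_fin pol_ge0.
by apply: lte_sum_pinfty => a _; apply: ho.
Qed.

End Markov.

Lemma xlogMr (R : realType) (M W r : R) : xlog (M * W) r = W * xlog M r.
Proof.
have [->|M0] := eqVneq M 0; first by rewrite mul0r !xlog0 mulr0.
have [->|W0] := eqVneq W 0; first by rewrite mulr0 xlog0 mul0r.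
by rewrite !xlogE ?mulf_neq0 //; ring.
Qed.

Section Entropy.
Variables (R : realType) (G : coop_game R) (T : {set Sj G}).

Definition mass (y : Sj G -> Aj G -> R) (o : Oj G) : R :=
  \sum_(l : Lj G | (o, l) \notin T) \sum_(a : Aj G) y (o, l) a.

Definition Cterm (c : {set 'I_(nag G)}) o lc ac : R :=
  \sum_(o1c : {dffun forall i : 'I_(nag G), option (obs G i)} | supp_on c o1c)
  \sum_(l1c : {dffun forall i : 'I_(nag G), option (loc G i)} | supp_on c l1c)
     xlog (ctrans c o lc ac o1c l1c) (ctrans c o lc ac o1c l1c).

Lemma gtermE (y : Sj G -> Aj G -> R) c (W : Oj G -> R) :
  gterm T y c W = - \sum_(o : Oj G)
    \sum_(lc : {dffun forall i : 'I_(nag G), option (loc G i)} | supp_on c lc)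
    \sum_(ac : {dffun forall i : 'I_(nag G), option (act G i)} | supp_on c ac)
    (W o * xlog (marg T y c o lc ac)
        (marg T y c o lc ac / \sum_(bc : {dffun forall i : 'I_(nag G), option (act G i)} | supp_on c bc) marg T y c o lc bc)
     + marg T y c o lc ac * W o * Cterm c o lc ac).
Proof.
rewrite /gterm -opprD; congr (- _); rewrite -big_split; apply: eq_bigr => o _.
rewrite -big_split; apply: eq_bigr => lc _.
rewrite -big_split; apply: eq_bigr => ac _ /=.
congr (_ + _); first by rewrite xlogMr.
rewrite /Cterm mulr_sumr; apply: eq_bigr => o1c _.
rewrite mulr_sumr; apply: eq_bigr => l1c _.
by rewrite xlogMl.
Qed.

Lemma marg_ge0 y c o lc ac : (forall s a, s \notin T -> 0 <= y s a) ->
  0 <= marg T y c o lc ac.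
Proof.
move=> y0; apply: sumr_ge0 => l /andP[lT _]; apply: sumr_ge0 => a _; exact: y0.
Qed.

Lemma margD (ya yb ym : Sj G -> Aj G -> R) c o lc ac :
  (forall s a, ya s a + yb s a = 2 * ym s a) ->
  marg T ya c o lc ac + marg T yb c o lc ac = 2 * marg T ym c o lc ac.
Proof.
move=> h; rewrite /marg -big_split mulr_sumr; apply: eq_bigr => l _.
by rewrite -big_split mulr_sumr; apply: eq_bigr => a _; apply: h.
Qed.

Lemma marg_le_sum y c o lc ac : (forall s a, s \notin T -> 0 <= y s a) ->
  supp_on c ac ->
  marg T y c o lc ac <= \sum_(bc : {dffun forall i : 'I_(nag G), option (act G i)} | supp_on c bc) marg T y c o lc bc.
Proof.
move=> y0 sac; rewrite (bigD1 ac) //= lerDl.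
by apply: sumr_ge0 => bc _; apply: marg_ge0.
Qed.

Lemma xlog_half (x r : R) : 2 * xlog (x / 2) r = xlog x r.
Proof.
have [->|x0] := eqVneq x 0; first by rewrite mul0r !xlog0 mulr0.
rewrite !xlogE ?mulf_neq0 ?invr_eq0 ?pnatr_eq0 //.
by rewrite mulrA mulrCA mulfV ?pnatr_eq0 // mulr1.
Qed.

Lemma gterm_mid (ya yb ym : Sj G -> Aj G -> R) c (W : Oj G -> R) :
  (forall s a, ya s a + yb s a = 2 * ym s a) ->
  (forall s a, s \notin T -> 0 <= ya s a) ->
  (forall s a, s \notin T -> 0 <= yb s a) ->
  (forall o, 0 <= W o) ->
  gterm T ya c W + gterm T yb c W <= 2 * gterm T ym c W.
Proof.
move=> hab ya0 yb0 W0; rewrite !gtermE mulrN -opprD lerN2 -big_split mulr_sumr.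
apply: ler_sum => o _; rewrite -big_split mulr_sumr; apply: ler_sum => lc _.
rewrite -big_split mulr_sumr; apply: ler_sum => ac sac.
set Ma := marg T ya c o lc ac; set Mb := marg T yb c o lc ac.
set Mm := marg T ym c o lc ac.
set Sa := \sum_(bc | _) marg T ya c o lc bc.
set Sb := \sum_(bc | _) marg T yb c o lc bc.
set Sm := \sum_(bc | _) marg T ym c o lc bc.
set C := Cterm c o lc ac.
have hM : Ma + Mb = 2 * Mm by apply: margD.
have hS : Sa + Sb = 2 * Sm.
  by rewrite /Sa /Sb /Sm -big_split mulr_sumr; apply: eq_bigr => bc _; apply: margD.
have eM : Mm = (Ma + Mb) / 2 by rewrite hM mulrC mulKf ?pnatr_eq0.
have eS : Sm = (Sa + Sb) / 2 by rewrite hS mulrC mulKf ?pnatr_eq0.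
have key : 2 * xlog Mm (Mm / Sm) <= xlog Ma (Ma / Sa) + xlog Mb (Mb / Sb).
  have -> : Mm / Sm = (Ma + Mb) / (Sa + Sb).
    rewrite eM eS invfM invrK; have [->|S0] := eqVneq (Sa + Sb) 0.
      by rewrite invr0 mul0r !mulr0.
    by field; rewrite ?pnatr_eq0.
  rewrite eM xlog_half; apply: xlog_logsum.
  - exact: marg_ge0.
  - exact: marg_le_sum.
  - exact: marg_ge0.
  - exact: marg_le_sum.
have h1 := ler_wpM2l (W0 o) key.
have e : 2 * (Mm * W o * C) = Ma * W o * C + Mb * W o * C.
  by rewrite !mulrA -hM !mulrDl.
move: h1 e; set X := xlog Mm _; set XA := xlog Ma _; set XB := xlog Mb _.
move=> h1 e.
have e2 : W o * (2 * X) = 2 * (W o * X) by rewrite mulrCA.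
rewrite mulrDr; apply: (@le_trans _ _ ((W o * XA + Ma * W o * C) + (W o * XB + Mb * W o * C))); last by []. rewrite mulrDr in h1; lra.
Qed.

Lemma hterm_lin (y : Sj G -> Aj G -> R) (m : Sj G -> R) (pi : Sj G -> Aj G -> R) :
  is_act_policy pi ->
  (forall s a, s \notin T -> y s a = m s * pi s a) ->
  hterm T y = - \sum_(s | s \notin T) m s *
     (\sum_a (xlog (pi s a) (pi s a) + pi s a * \sum_(s' : Sj G) xlog (jtrans s a s') (jtrans s a s'))).
Proof.
move=> hpi hy; rewrite /hterm -opprD; congr (- _); rewrite -big_split.
apply: eq_bigr => s sT; rewrite -big_split mulr_sumr; apply: eq_bigr => a _ /=.
have -> : \sum_b y s b = m s.
  by under eq_bigr do rewrite hy //; rewrite -mulr_sumr pol_sum1 // mulr1.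
rewrite hy // mulrDr; congr (_ + _).
  have [->|m0] := eqVneq (m s) 0; first by rewrite !mul0r xlog0.
  by rewrite mulrAC mulfV // mul1r xlogMl.
rewrite mulrA mulr_sumr; apply: eq_bigr => s' _.
by rewrite xlogMl.
Qed.

Lemma Phi_val_mid (ya yb ym : Sj G -> Aj G -> R) W1 W2 :
  (forall s a, ya s a + yb s a = 2 * ym s a) ->
  (forall s a, s \notin T -> 0 <= ya s a) ->
  (forall s a, s \notin T -> 0 <= yb s a) ->
  (forall o i, 0 <= W1 o i) -> (forall o c, 0 <= W2 o c) ->
  hterm T ya + hterm T yb = 2 * hterm T ym ->
  Phi_val T ya W1 W2 + Phi_val T yb W1 W2 <= 2 * Phi_val T ym W1 W2.
Proof.
move=> hab ya0 yb0 W10 W20 hh; rewrite /Phi_val.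
have g1 : \sum_(i < nag G) gterm T ya [set i] (fun o => W1 o i) +
          \sum_(i < nag G) gterm T yb [set i] (fun o => W1 o i) <=
          2 * \sum_(i < nag G) gterm T ym [set i] (fun o => W1 o i).
  by rewrite -big_split mulr_sumr; apply: ler_sum => i _; apply: gterm_mid.
have g2 : \sum_(c : Acomm G) gterm T ya (val c) (fun o => W2 o c) +
          \sum_(c : Acomm G) gterm T yb (val c) (fun o => W2 o c) <=
          2 * \sum_(c : Acomm G) gterm T ym (val c) (fun o => W2 o c).
  by rewrite -big_split mulr_sumr; apply: ler_sum => c _; apply: gterm_mid.
move: g1 g2 hh; set a1 := \sum_(i < nag G) _; set a2 := \sum_(i < nag G) _;
  set a3 := \sum_(i < nag G) _.
set b1 := \sum_(c : Acomm G) _; set b2 := \sum_(c : Acomm G) _; set b3 := \sum_(c : Acomm G) _.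
move=> g1 g2 hh; lra.
Qed.

Lemma gterm_W (y : Sj G -> Aj G -> R) c (W W' : Oj G -> R) :
  (forall s a, s \notin T -> 0 <= y s a) ->
  (forall o, mass y o = 0 \/ W o = W' o) ->
  gterm T y c W = gterm T y c W'.
Proof.
move=> y0 hW; rewrite !gtermE; congr (- _); apply: eq_bigr => o _.
case: (hW o) => [m0|->] //.
have yz : forall l a, (o, l) \notin T -> y (o, l) a = 0.
  move=> l a oT.
  have h1 : forall l, (o, l) \notin T -> \sum_a y (o, l) a = 0.
    apply: (psumr_eq0P _ m0) => l' oT'; apply: sumr_ge0 => b _; exact: y0.
  move/psumr_eq0P: (h1 l oT); apply => // b _; exact: y0.
have mz : forall lc ac, marg T y c o lc ac = 0.
  move=> lc ac; apply: big1 => l /andP[oT _]; apply: big1 => a _; exact: yz.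
apply: eq_bigr => lc _; apply: eq_bigr => ac _.
by rewrite !mz !xlog0 !mulr0 !mul0r.
Qed.

Lemma Phi_val_W (y : Sj G -> Aj G -> R) W1 W2 W1' W2' :
  (forall s a, s \notin T -> 0 <= y s a) ->
  (forall o, mass y o = 0 \/ ((forall i, W1 o i = W1' o i) /\ (forall c, W2 o c = W2' o c))) ->
  Phi_val T y W1 W2 = Phi_val T y W1' W2'.
Proof.
move=> y0 hW; rewrite /Phi_val; congr (_ + _ + _).
  apply: eq_bigr => i _; apply: gterm_W => // o.
  by case: (hW o) => [->|[h _]]; [left|right; rewrite h].
apply: eq_bigr => c _; apply: gterm_W => // o.
by case: (hW o) => [->|[_ h]]; [left|right; rewrite h].
Qed.

End Entropy.

Arguments nu_flow {R G T pi}. Arguments nuE_bound {R G T pi}. Arguments reach_nu {R G T pi}.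
Arguments fin_of_occ {R G T pi}. Arguments occE {R G T pi}. Arguments nu_ge0 {R G T pi}.
Arguments nuE_nu {R G T pi}. Arguments nuE_ge0 {R G T pi}. Arguments pol_ge0 {R G pi}.
Arguments pol_sum1 {R G pi}. Arguments mass {R G} T y o. Arguments nu {R G} T pi s.
Arguments nuE {R G} T pi s. Arguments delta {R G} s.

Section Flow.
Variables (R : realType) (G : coop_game R) (T : {set Sj G}).
Variable (pa : Sj G -> Aj G -> R).
Hypothesis hpa : is_act_policy pa.

Definition out (B : pred (Sj G)) (s' : Sj G) : R :=
  \sum_b pa s' b * \sum_(s | B s) jtrans s' b s.

Lemma out_ge0 B s : 0 <= out B s.
Proof.
apply: sumr_ge0 => b _; apply: mulr_ge0; first exact: pol_ge0.
by apply: sumr_ge0 => s' _; exact: jtrans_ge0.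
Qed.

Lemma flow_sum (B : pred (Sj G)) (f : Sj G -> R) :
  \sum_(s | B s) \sum_(s' | s' \notin T) \sum_b f s' * pa s' b * jtrans s' b s =
  \sum_(s' | s' \notin T) f s' * out B s'.
Proof.
rewrite exchange_big; apply: eq_bigr => s' _.
rewrite exchange_big /out mulr_sumr; apply: eq_bigr => b _.
by rewrite mulrA mulr_sumr.
Qed.

Lemma out_tot s : out (fun s => s \notin T) s + out (fun s => s \in T) s = 1.
Proof.
rewrite /out -big_split /= -(pol_sum1 hpa s); apply: eq_bigr => b _.
have h := @jtrans_sum1 R G s b; rewrite (bigID (fun s => s \in T)) /= in h. by rewrite -mulrDr addrC h mulr1.
Qed.

Lemma out_mono (A B : {set Sj G}) s : A \subset B ->
  out (fun s => s \in A) s <= out (fun s => s \in B) s.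
Proof.
move=> AB; apply: ler_sum => b _; apply: ler_wpM2l; first exact: pol_ge0.
rewrite big_mkcond [X in _ <= X]big_mkcond; apply: ler_sum => s' _.
case: ifP => sA; first by rewrite (fintype.subsetP AB _ sA).
by case: ifP => // _; exact: jtrans_ge0.
Qed.

Lemma tfE (tg : {set Sj G}) (y : Sj G -> Aj G -> R) (m : Sj G -> R) :
  (forall s a, s \notin T -> y s a = m s * pa s a) ->
  \sum_(s | s \notin T) \sum_a \sum_(s' in tg) y s a * jtrans s a s' =
  \sum_(s | s \notin T) m s * out (fun s => s \in tg) s.
Proof.
move=> hy; apply: eq_bigr => s sT; rewrite /out mulr_sumr; apply: eq_bigr => a _.
by rewrite hy // mulrA mulr_sumr.
Qed.

End Flow.

Arguments nu_flow {R G T pi}. Arguments nuE_bound {R G T pi}. Arguments reach_nu {R G T pi}.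
Arguments fin_of_occ {R G T pi}. Arguments occE {R G T pi}. Arguments nu_ge0 {R G T pi}.
Arguments nuE_nu {R G T pi}. Arguments nuE_ge0 {R G T pi}. Arguments pol_ge0 {R G pi}.
Arguments pol_sum1 {R G pi}. Arguments mass {R G} T y o. Arguments nu {R G} T pi s.
Arguments nuE {R G} T pi s. Arguments delta {R G} s.
Arguments out {R G} pa B s'.
Arguments out_tot {R G T pa}. Arguments flow_sum {R G T pa}. Arguments out_ge0 {R G pa}.
Arguments out_mono {R G pa}. Arguments tfE {R G T pa}.

Arguments Phi_val_W {R G T}. Arguments Phi_val_mid {R G T}. Arguments hterm_lin {R G T}.

Lemma wlem (R : realType) (G : coop_game R) (pc q : Oj G -> Acomm G -> R)
  (hpc : is_comm_policy pc) o (k : R) :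
  k != 0 -> (forall c, q o c = k * pc o c) ->
  (forall i, \sum_(c : Acomm G | i \notin val c) pc o c =
     (\sum_(c : Acomm G | i \notin val c) q o c) / \sum_(c' : Acomm G) q o c') /\
  (forall c, pc o c = q o c / \sum_(c' : Acomm G) q o c').
Proof.
move=> k0 hq.
have hs : \sum_(c' : Acomm G) q o c' = k.
  under eq_bigr do rewrite hq; by rewrite -mulr_sumr (proj2 (hpc o)) mulr1.
rewrite hs; split => [i|c].
  by under [X in _ = X / _]eq_bigr do rewrite hq; rewrite -mulr_sumr mulrC mulKf.
by rewrite hq mulrC mulKf.
Qed.

Arguments wlem {R G pc} q hpc {o k}.

Lemma lin2 (R : realType) (I J : finType) (P : pred I) (f g w : I -> J -> R) :
  \sum_(s | P s) \sum_b (2 * f s b - g s b) * w s b =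
  2 * \sum_(s | P s) \sum_b f s b * w s b - \sum_(s | P s) \sum_b g s b * w s b.
Proof.
rewrite mulr_sumr -sumrB; apply: eq_bigr => s _.
rewrite mulr_sumr -sumrB; apply: eq_bigr => b _; ring.
Qed.

Lemma lin3 (R : realType) (I J K : finType) (P : pred I) (Q : pred K)
   (f g : I -> J -> R) (w : I -> J -> K -> R) :
  \sum_(s | P s) \sum_b \sum_(k | Q k) (2 * f s b - g s b) * w s b k =
  2 * \sum_(s | P s) \sum_b \sum_(k | Q k) f s b * w s b k
    - \sum_(s | P s) \sum_b \sum_(k | Q k) g s b * w s b k.
Proof.
rewrite mulr_sumr -sumrB; apply: eq_bigr => s _.
rewrite mulr_sumr -sumrB; apply: eq_bigr => b _.
rewrite mulr_sumr -sumrB; apply: eq_bigr => k _; ring.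
Qed.

Arguments lin2 {R I J}. Arguments lin3 {R I J K}.

Theorem theorem2 (R : realType) (G : coop_game R)
  (Starget Savoid : {set Sj G})
  (x1 : Sj G -> Aj G -> R) (x2 : Oj G -> Acomm G -> R)
  (pc : Oj G -> Acomm G -> R) (pa : Sj G -> Aj G -> R) :
  [disjoint Starget & Savoid] ->
  opt_optimal (Starget :|: Savoid) Starget x1 x2 ->
  is_comm_policy pc ->
  is_act_policy pa ->
  (forall o, \sum_(d : Acomm G) x2 o d != 0 ->
     forall c, pc o c = x2 o c / \sum_(d : Acomm G) x2 o d) ->
  (forall s, s \notin Starget :|: Savoid -> \sum_(b : Aj G) x1 s b != 0 ->
     forall a, pa s a = x1 s a / \sum_(b : Aj G) x1 s b) ->
  reach_prob (Starget :|: Savoid) Starget pa = vstar (Starget :|: Savoid) Starget /\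
  (forall (pc' : Oj G -> Acomm G -> R) (pa' : Sj G -> Aj G -> R),
     is_comm_policy pc' -> is_act_policy pa' ->
     reach_prob (Starget :|: Savoid) Starget pa' = vstar (Starget :|: Savoid) Starget ->
     (forall s a, s \notin Starget :|: Savoid ->
        (occ (Starget :|: Savoid) pa' s a < +oo)%E) ->
     Dbar (Starget :|: Savoid) pc pa <= Dbar (Starget :|: Savoid) pc' pa').
Proof.
move=> _ [hfeas hopt] hpc hpa hx2 hx1.
set T := Starget :|: Savoid.
have tgT : Starget \subset T by rewrite /T; apply: finset.subsetUl.
case: (hfeas) => hx1ge0 hx2ge0 hflow hreachx hcons.
pose X s := \sum_a x1 s a.
have X0 : forall s, s \notin T -> 0 <= X s.
  by move=> s sT; apply: sumr_ge0 => a _; exact: hx1ge0.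
have hxX : forall s a, s \notin T -> x1 s a = X s * pa s a.
  move=> s a sT; have [Xz|Xn] := eqVneq (X s) 0.
    rewrite Xz mul0r; move: Xz; rewrite /X => /psumr_eq0P; apply => // b _.
    exact: hx1ge0.
  by rewrite (hx1 s sT Xn a) mulrC divfK.
have Xflow : forall s, s \notin T -> X s = delta s + \sum_(s' | s' \notin T) \sum_b
      X s' * pa s' b * jtrans s' b s.
  move=> s sT; rewrite /X hflow // addrC /delta; congr (_ + _).
  apply: eq_bigr => s' s'T; apply: eq_bigr => b _; by rewrite hxX.
have hfin : forall s, s \notin T -> nuE T pa s \is a fin_num.
  move=> s sT; rewrite ge0_fin_numE ?nuE_ge0 //.
  by apply: le_lt_trans (nuE_bound hpa X X0 Xflow s sT) _; exact: ltry.
pose nv := nu T pa.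
have nv0 : forall s, 0 <= nv s by move=> s; exact: (nu_ge0 hpa hfin).
have nvX : forall s, s \notin T -> nv s <= X s.
  by move=> s sT; rewrite -lee_fin /nv -(nuE_nu hpa hfin) nuE_bound.
have nvflow := nu_flow hpa hfin.
pose outN := out pa (fun s => s \notin T).
pose outT := out pa (fun s => s \in T).
pose outG := out pa (fun s => s \in Starget).
have outNT : forall s, outT s = 1 - outN s.
  by move=> s; rewrite -(@out_tot _ _ T pa hpa s) /outN /outT addrC addKr.
have sumX : \sum_(s | s \notin T) X s =
    \sum_(s | s \notin T) delta s + \sum_(s' | s' \notin T) X s' * outN s'.
  under eq_bigr => s sT do rewrite Xflow //.
  by rewrite big_split /= flow_sum.
have sumN : \sum_(s | s \notin T) nv s =
    \sum_(s | s \notin T) delta s + \sum_(s' | s' \notin T) nv s' * outN s'.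
  under eq_bigr => s sT do rewrite /nv nvflow.
  by rewrite big_split /= flow_sum.
have hz : \sum_(s | s \notin T) (X s - nv s) * outT s = 0.
  have e1 : \sum_(s | s \notin T) (X s - nv s) * outT s =
     (\sum_(s | s \notin T) X s - \sum_(s | s \notin T) nv s) -
     (\sum_(s | s \notin T) X s * outN s - \sum_(s | s \notin T) nv s * outN s).
    rewrite -!sumrB; apply: eq_bigr => s _; rewrite outNT; ring.
  by rewrite e1 sumX sumN; ring.
have hzT : forall s, s \notin T -> (X s - nv s) * outT s = 0.
  apply: (psumr_eq0P _ hz) => s sT; apply: mulr_ge0; last exact: out_ge0.
  by rewrite subr_ge0 nvX.
have hzG : forall s, s \notin T -> (X s - nv s) * outG s = 0.
  move=> s sT; apply/eqP; rewrite eq_le; apply/andP; split; last first.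
    by apply: mulr_ge0; [rewrite subr_ge0 nvX | exact: out_ge0].
  rewrite -(hzT s sT); apply: ler_wpM2l; first by rewrite subr_ge0 nvX.
  exact: out_mono.
have tfX : \sum_(s | s \notin T) \sum_a \sum_(s' in Starget) x1 s a * jtrans s a s' =
    \sum_(s | s \notin T) nv s * outG s.
  rewrite (@tfE _ _ T pa Starget x1 X) //.
  apply/eqP; rewrite -subr_eq0 -sumrB; apply/eqP; apply: big1 => s sT.
  by rewrite -mulrBl hzG.
pose dtg := \sum_(s in Starget) delta s.
have dtg0 : 0 <= dtg by apply: sumr_ge0 => s _; rewrite /delta ler0n.
have hreach : forall pi (hpi : is_act_policy pi)
    (hf : forall s, s \notin T -> nuE T pi s \is a fin_num),
    reach_prob T Starget pi = (dtg + \sum_(s' | s' \notin T) nu T pi s' *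
       out pi (fun s => s \in Starget) s')%:E.
  move=> pi hpi hf; rewrite (reach_nu hpi hf); congr EFin.
  under eq_bigr => s _ do rewrite (nu_flow hpi hf).
  by rewrite big_split /= flow_sum.
have hsup : (reach_prob T Starget pa <= vstar T Starget)%E.
  by apply: ereal_sup_ubound; exists pa.
have hvx : (vstar T Starget <= (\sum_(s | s \notin T) nv s * outG s)%:E)%E.
  by rewrite -tfX.
have hr := hreach pa hpa hfin.
have dtgz : dtg = 0.
  apply/eqP; rewrite eq_le dtg0 andbT.
  have := le_trans hsup hvx; rewrite hr lee_fin; rewrite /nv /outG; lra.
have claim1 : reach_prob T Starget pa = vstar T Starget.
  apply/eqP; rewrite eq_le hsup /=; rewrite hr dtgz add0r; exact: hvx.
split; first exact: claim1.
move=> pc' pa' hpc' hpa' hreach' hocc.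
have hfin' := fin_of_occ hpa' hocc.
pose nv' := nu T pa'.
pose y1 s a := nv' s * pa' s a.
pose y2 o c := mass T y1 o * pc' o c.
have y10 : forall s a, s \notin T -> 0 <= y1 s a.
  by move=> s a _; apply: mulr_ge0; [exact: (nu_ge0 hpa' hfin')| exact: (pol_ge0 hpa')].
have mass0 : forall y o, (forall s a, s \notin T -> 0 <= y s a) -> 0 <= mass T y o.
  by move=> y o y0; apply: sumr_ge0 => l oT; apply: sumr_ge0 => a _; exact: y0.
have hs2 : forall o, \sum_c y2 o c = mass T y1 o.
  by move=> o; rewrite /y2 -mulr_sumr (proj2 (hpc' o)) mulr1.
have feas1 : opt_feasible T Starget y1 y2.
  split.
  - exact: y10.
  - by move=> o c; apply: mulr_ge0; [exact: mass0 | exact: (proj1 (hpc' o))].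
  - move=> s sT; rewrite /y1 -mulr_sumr (pol_sum1 hpa') mulr1 /nv' (nu_flow hpa' hfin').
    by rewrite addrC /delta.
  - rewrite -hreach' (hreach pa' hpa' hfin') dtgz add0r lee_fin.
    by rewrite (@tfE _ _ T pa' Starget y1 nv').
  - by move=> o; rewrite hs2.
have hP1 := hopt y1 y2 feas1.
have occ' : (fun s a => fine (occ T pa' s a)) = y1.
  apply/funext => s; apply/funext => a.
  by rewrite (occE hpa') (nuE_nu hpa' hfin') -EFinM /= mulrC.
have D1 : Dbar T pc' pa' = Phi T y1 y2.
  rewrite /Dbar /Phi occ'; apply: Phi_val_W => // o.
  have [m0|mn] := eqVneq (mass T y1 o) 0; [by left | right].
  have [h1 h2] := wlem y2 hpc' mn (fun c => erefl).
  by split => [i|c]; rewrite ?h1 ?h2.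
pose a' s b := nv s * pa s b.
have a'0 : forall s b, s \notin T -> 0 <= a' s b.
  by move=> s b _; apply: mulr_ge0; [exact: nv0 | exact: (pol_ge0 hpa)].
have occa : (fun s a => fine (occ T pa s a)) = a'.
  apply/funext => s; apply/funext => a.
  by rewrite (occE hpa) (nuE_nu hpa hfin) -EFinM /= mulrC.
pose Psi y := Phi_val T y (fun o i => \sum_(c : Acomm G | i \notin val c) pc o c) pc.
have Da : Dbar T pc pa = Psi a' by rewrite /Dbar occa.
pose S o := \sum_c x2 o c.
have hS : forall o, mass T x1 o = S o by move=> o; rewrite /mass hcons.
have S0 : forall o, 0 <= S o by move=> o; rewrite -hS mass0.
have x2_eq : forall o c, x2 o c = S o * pc o c.
  move=> o c; have [Sz|Sn] := eqVneq (S o) 0.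
    rewrite Sz mul0r; move: Sz; rewrite /S => /psumr_eq0P; apply => // d _.
  by rewrite (hx2 o Sn c) mulrC divfK.
have Px : Phi T x1 x2 = Psi x1.
  rewrite /Phi; apply: Phi_val_W => // o.
  have [m0|mn] := eqVneq (mass T x1 o) 0; [by left | right].
  rewrite hS in mn.
  have [h1 h2] := wlem x2 hpc mn (x2_eq o).
  by split => [i|c]; rewrite -?h1 -?h2.
have a'x : forall s b, s \notin T -> a' s b <= x1 s b.
  by move=> s b sT; rewrite hxX // ler_wpM2r ?(pol_ge0 hpa) ?nvX.
have ma : forall o, mass T a' o <= S o.
  move=> o; rewrite -hS; apply: ler_sum => l oT; apply: ler_sum => b _; exact: a'x.
have ma0 : forall o, 0 <= mass T a' o by move=> o; exact: mass0.
pose bb s b := 2 * x1 s b - a' s b.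
pose x2b o c := 2 * x2 o c - mass T a' o * pc o c.
have bb0 : forall s b, s \notin T -> 0 <= bb s b.
  move=> s b sT; have := a'x s b sT; have := hx1ge0 s b sT; rewrite /bb; lra.
have x2b_eq : forall o c, x2b o c = (2 * S o - mass T a' o) * pc o c.
  by move=> o c; rewrite /x2b x2_eq; ring.
have mbb : forall o, mass T bb o = 2 * S o - mass T a' o.
  move=> o; rewrite -hS /mass mulr_sumr -sumrB; apply: eq_bigr => l _.
  by rewrite mulr_sumr -sumrB.
have sa' : forall s, \sum_b a' s b = nv s.
  by move=> s; rewrite /a' -mulr_sumr (pol_sum1 hpa) mulr1.
have tfa : \sum_(s | s \notin T) \sum_a \sum_(s' in Starget) a' s a * jtrans s a s' =
    \sum_(s | s \notin T) nv s * outG s.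
  by rewrite (@tfE _ _ T pa Starget a' nv).
have feasb : opt_feasible T Starget bb x2b.
  split.
  - exact: bb0.
  - move=> o c; rewrite x2b_eq; apply: mulr_ge0; last exact: (proj1 (hpc o)).
    have := ma o; have := S0 o; lra.
  - move=> s sT.
    have -> : \sum_a bb s a = 2 * X s - nv s.
      by rewrite /bb sumrB -mulr_sumr sa'.
    rewrite (lin2 (fun s' => s' \notin T) x1 a' (fun s' b => jtrans s' b s)).
    rewrite /X hflow // /nv (nvflow s) /delta.
    have e : (\sum_(s' | s' \notin T) \sum_b nu T pa s' * pa s' b * jtrans s' b s) =
      \sum_(s0 | s0 \notin T) \sum_b a' s0 b * jtrans s0 b s by [].
    rewrite e.
    set B1 := (\sum_(s0 | s0 \notin T) \sum_b x1 s0 b * jtrans s0 b s).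
    set B2 := (\sum_(s0 | s0 \notin T) \sum_b a' s0 b * jtrans s0 b s).
    ring.
  - rewrite /bb (lin3 (fun s => s \notin T) (fun s' => s' \in Starget) x1 a'
       (fun s a s' => jtrans s a s')) tfa -tfX.
    by rewrite mulr2n mulrDl mul1r addrK.
  - move=> o; rewrite -/(mass T bb o) mbb.
    by rewrite /x2b sumrB -!mulr_sumr (proj2 (hpc o)) mulr1.
have hP2 := hopt bb x2b feasb.
have Pb : Phi T bb x2b = Psi bb.
  rewrite /Phi; apply: Phi_val_W => // o.
  have [m0|mn] := eqVneq (mass T bb o) 0; [by left | right].
  rewrite mbb in mn.
  have [h1 h2] := wlem x2b hpc mn (x2b_eq o).
  by split => [i|c]; rewrite -?h1 -?h2.
have hmid : Psi a' + Psi bb <= 2 * Psi x1.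
  apply: Phi_val_mid => //.
  - by move=> s b; rewrite /bb; ring.
  - by move=> o i; apply: sumr_ge0 => c _; exact: (proj1 (hpc o)).
  - by move=> o c; exact: (proj1 (hpc o)).
  - rewrite (hterm_lin a' nv pa hpa) // (hterm_lin bb (fun s => 2 * X s - nv s) pa hpa);
      last by move=> s b sT; rewrite /bb /a' hxX //; ring.
    rewrite (hterm_lin x1 X pa hpa) //.
    rewrite mulrN -opprD; congr (- _); rewrite mulr_sumr -big_split; apply: eq_bigr => s _ /=.
    ring.
rewrite Da D1; move: hP1 hP2 hmid; rewrite -/T Pb Px; lra.
Qed.
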